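(* Consider the graph whose vertices are the admissible Hilbert polynomials and whose edges are the pairs $(P,\sigma(P))$ and $(P,\lambda(P))$ for all admissible Hilbert polynomials $P$. This graph is an infinite binary tree (each vertex $P$ having the two children $\sigma(P)$ and $\lambda(P)$), whose root is the constant polynomial $1$.
   Context: Binomial coefficients are polynomials in $t$: $\binom{t+a}{b}=\frac{(t+a)\cdots(t+a-b+1)}{b!}$ for $b\ge0$ and $0$ for $b<0$. A polynomial $P\in\mathbb{Q}[t]$ is an admissible Hilbert polynomial if it is the Hilbert polynomial of a nonempty closed subscheme of some projective space over an algebraically closed field; equivalently it has a (unique) Gotzmann expression $P(t)=\sum_{j=1}^r\binom{t+b_j-(j-1)}{b_j}$ with integers $b_1\ge\dots\ge b_r\ge0$, and equivalently a (unique) Macaulay–Hartshorne expression $P(t)=\sum_{i=0}^d\binom{t+i}{i+1}-\binom{t+i-e_i}{i+1}$ with integers $e_0\ge e_1\ge\dots\ge e_d>0$. Define $\sigma(P):=1+P$ (Gotzmann partition $(b_1,\dots,b_r,0)$, Macaulay–Hartshorne partition $(e_0+1,e_1,\dots,e_d)$) and $\lambda(P)$ the admissible polynomial with Gotzmann expression $\sum_{j=1}^r\binom{t+b_j+1-(j-1)}{b_j+1}$ (Macaulay–Hartshorne partition $(e_0,e_0,e_1,\dots,e_d)$). *)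

(* Defs.v *)
From mathcomp Require Import all_boot all_order all_algebra.
From Stdlib Require Import Relations.
Set Implicit Arguments. Unset Strict Implicit. Unset Printing Implicit Defensive.
Import Order.TTheory GRing.Theory Num.Theory.
Local Open Scope ring_scope.

(* The binomial polynomial  binom(t + a, b) = (t+a)(t+a-1)...(t+a-b+1)/b!  in Q[t]
   (for b : nat, so b >= 0; the case b < 0 never occurs below). *)
Definition binp (a : int) (b : nat) : {poly rat} :=
  (b`!%:R)^-1 *: \prod_(i < b) ('X + ((a - (i : nat)%:Z)%:~R)%:P).

(* Gotzmann polynomial of a sequence s = [:: b_1; ...; b_r] :
   sum_{j=1}^r binom(t + b_j - (j-1), b_j)   (j is 0-indexed below). *)
Definition gotz (s : seq nat) : {poly rat} :=
  \sum_(j < size s) binp ((nth 0%N s j)%:Z - (j : nat)%:Z) (nth 0%N s j).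

Definition gotz_partition (s : seq nat) : bool :=
  (s != [::]) && sorted geq s.

Definition admissible (P : {poly rat}) : Prop :=
  exists s, gotz_partition s /\ P = gotz s.

Definition sigma (P : {poly rat}) : {poly rat} := 1 + P.

(* Stated relationally so that well-definedness of lambda is part of the claim. *)
Definition lambda_rel (P Q : {poly rat}) : Prop :=
  exists s, gotz_partition s /\ P = gotz s /\ Q = gotz (map S s).

Definition rooted_binary_tree (T : Type) (V : T -> Prop)
    (c1 c2 : T -> T -> Prop) (root : T) : Prop :=
  let edge := fun P Q => V P /\ (c1 P Q \/ c2 P Q) in
  [/\ V root,
      (forall P, V P -> exists Q1 Q2,
          c1 P Q1 /\ c2 P Q2 /\ V Q1 /\ V Q2 /\ Q1 <> Q2 /\
          (forall Q, c1 P Q -> Q = Q1) /\ (forall Q, c2 P Q -> Q = Q2)),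
      (forall P, ~ edge P root),
      (forall P P' Q, edge P Q -> edge P' Q -> P = P') &
      (forall Q, V Q -> clos_refl_trans T edge root Q)].

(* Main.v *)
Require Import Defs.
From mathcomp Require Import all_boot all_order all_algebra.
From Stdlib Require Import Relations.
From mathcomp Require Import zify.
Set Implicit Arguments. Unset Strict Implicit. Unset Printing Implicit Defensive.
Import Order.TTheory GRing.Theory Num.Theory.
Local Open Scope ring_scope.

Lemma prodXaddC_monic (rI : seq nat) (F : nat -> rat) :
  (\prod_(i <- rI) ('X + (F i)%:P)) \is monic /\
  size (\prod_(i <- rI) ('X + (F i)%:P)) = (size rI).+1.
Proof.
elim: rI => [|i r [IHm IHs]]; first by rewrite big_nil monic1 size_poly1.
rewrite big_cons monicMl ?monicXaddC //; split=> //.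
by rewrite size_monicM ?monicXaddC ?monic_neq0 // size_XaddC IHs.
Qed.

Lemma binp_prod a b : binp a b = (b`!%:R)^-1 *: \prod_(i <- iota 0 b) ('X + ((a - i%:Z)%:~R)%:P).
Proof. by rewrite /binp -[in iota 0 b](subn0 b) -/(index_iota 0 b) big_mkord. Qed.

Lemma size_binp a b : size (binp a b) = b.+1.
Proof.
have [_ Hs] := prodXaddC_monic (iota 0 b) (fun i => (a - i%:Z)%:~R).
rewrite binp_prod size_scale ?Hs ?size_iota // invr_eq0 pnatr_eq0 -lt0n fact_gt0 //.
Qed.

Lemma lead_binp a b : lead_coef (binp a b) = (b`!%:R)^-1.
Proof.
have [Hm _] := prodXaddC_monic (iota 0 b) (fun i => (a - i%:Z)%:~R).
by rewrite binp_prod lead_coefZ (eqP Hm) mulr1.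
Qed.

Lemma binp0 a : binp a 0 = 1.
Proof. by rewrite /binp big_ord0 invr1 scale1r. Qed.

Fixpoint go (m : nat) (s : seq nat) : {poly rat} :=
  if s is b :: s' then binp (b%:Z - m%:Z) b + go m.+1 s' else 0.

Lemma gotz_go_gen s m :
  \sum_(j < size s) binp ((nth 0%N s j)%:Z - (j + m)%N%:Z) (nth 0%N s j) = go m s.
Proof.
elim: s m => [|b s IH] m /=; first by rewrite big_ord0.
rewrite big_ord_recl /= add0n; congr (_ + _).
by rewrite -IH; apply: eq_bigr => j _; rewrite /bump /= add1n addSnnS.
Qed.

Lemma gotz_go s : gotz s = go 0 s.
Proof. by rewrite -gotz_go_gen /gotz; apply: eq_bigr => j _; rewrite addn0. Qed.

Lemma go_cat s t m : go m (s ++ t) = go m s + go (m + size s) t.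
Proof.
elim: s m => [|b s IH] m /=; first by rewrite add0r addn0.
by rewrite IH addrA addSnnS.
Qed.

Lemma gotz_rcons0 s : gotz (rcons s 0%N) = 1 + gotz s.
Proof. by rewrite !gotz_go -cats1 go_cat /= binp0 addr0 addrC. Qed.

Lemma go_size_le h m s : all (fun x => x <= h)%N s -> (size (go m s) <= h.+1)%N.
Proof.
elim: s m => [|b s IH] m /=; first by rewrite size_poly0.
case/andP=> hb hs; apply: leq_trans (size_add _ _) _.
by rewrite geq_max size_binp ltnS hb IH.
Qed.

Lemma go_coef_ge0 h m s : all (fun x => x <= h)%N s -> 0 <= (go m s)`_h.
Proof.
elim: s m => [|b s IH] m /=; first by rewrite coef0.
case/andP=> hb hs; rewrite coefD addr_ge0 ?IH //.
case: (ltngtP b h) hb => // [lt _ | -> _].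
  by rewrite nth_default // size_binp.
by rewrite -[h in _`_h]/(h.+1.-1) -(size_binp (h%:Z - m%:Z) h) -lead_coefE lead_binp invr_ge0 ler0n.
Qed.

Lemma go_size m b s : sorted geq (b :: s) -> size (go m (b :: s)) = b.+1.
Proof.
move=> so; have hs : all (fun x => x <= b)%N s.
  by have := order_path_min (fun a c d (h1 : geq c a) (h2 : geq a d) => leq_trans h2 h1) so.
apply/eqP; rewrite eqn_leq go_size_le /= ?leqnn ?hs //.
have : 0 < (go m (b :: s))`_b.
  rewrite /= coefD -[b in _`_b]/(b.+1.-1) -{1}(size_binp (b%:Z - m%:Z) b) -lead_coefE lead_binp.
  by rewrite ltr_wpDr ?go_coef_ge0 // invr_gt0 ltr0n fact_gt0.
by move=> pos; rewrite ltnNge; apply/negP=> le; move: pos; rewrite nth_default // ltxx.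
Qed.

Lemma go_inj m s s' : sorted geq s -> sorted geq s' -> go m s = go m s' -> s = s'.
Proof.
elim: s m s' => [|b s IH] m [|b' s'] //= so so' E.
- have E' : go m [::] = go m (b' :: s') := E.
  by have := go_size m so'; rewrite -E' size_poly0.
- have E' : go m (b :: s) = go m [::] := E.
  by have := go_size m so; rewrite E' size_poly0.
have E' : go m (b :: s) = go m (b' :: s') := E.
have [Hb] : b.+1 = b'.+1 by rewrite -(go_size m so) -(go_size m so') E'.
subst b'; rewrite (IH m.+1 s') ?(path_sorted so) ?(path_sorted so') //.
by apply: (addrI (binp (b%:Z - m%:Z) b)).
Qed.

Lemma gotz_inj s s' : sorted geq s -> sorted geq s' -> gotz s = gotz s' -> s = s'.
Proof. by rewrite !gotz_go; apply: go_inj. Qed.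

Lemma sorted_rcons0 s : sorted geq s -> sorted geq (rcons s 0%N).
Proof. case: s => //= x s so; by rewrite rcons_path so. Qed.

Lemma sorted_mapS s : sorted geq s -> sorted geq (map S s).
Proof. by apply: homo_sorted => x y. Qed.

Lemma sorted_mappred s : sorted geq s -> sorted geq (map predn s).
Proof. by apply: homo_sorted => x y /= h; rewrite -!subn1 leq_sub2r. Qed.

Lemma gotz_rcons_mapS s s' : sorted geq s -> sorted geq s' ->
  gotz (rcons s 0%N) <> gotz (map S s').
Proof.
move=> so so' /gotz_inj; rewrite sorted_rcons0 // sorted_mapS // => /(_ erefl erefl) E.
have : (0 \in rcons s 0)%N by rewrite mem_rcons mem_head.
by rewrite E => /mapP [].
Qed.

Definition edge (P Q : {poly rat}) := admissible P /\ (Q = sigma P \/ lambda_rel P Q).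

Lemma reach n s : (sumn s + size s < n)%N -> gotz_partition s ->
  clos_refl_trans _ edge 1 (gotz s).
Proof.
elim: n s => [|n IH] s //= lt /andP [ne so].
case/lastP: s lt ne so => [|s x] // lt _ so.
case: x lt so => [|x] lt so.
  case: s lt so => [|y s] lt so.
    by rewrite gotz_go /= binp0 addr0; apply: rt_refl.
  have so' : sorted geq (y :: s).
    by move: so; rewrite /= rcons_path => /andP [].
  apply: rt_trans (IH (y :: s) _ _) _.
  - by move: lt; rewrite size_rcons -cats1 sumn_cat /=; lia.
  - by rewrite /gotz_partition so'.
  apply: rt_step; split; first by exists (y :: s); rewrite /gotz_partition so'.
  by left; rewrite gotz_rcons0.
have all1 : all (fun z => 0 < z)%N (rcons s x.+1).
  have : sorted leq (rev (rcons s x.+1)) by rewrite rev_sorted.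
  rewrite rev_rcons /= => /(order_path_min leq_trans).
  rewrite all_rev all_rcons /= => H; apply/allP => z zin; have := allP H z zin; exact: leq_trans.
set t := rcons s x.+1 in lt so all1 *.
have Et : t = map S (map predn t).
  rewrite -map_comp -[LHS]map_id; apply/eq_in_map => z /(allP all1) /=.
  by case: z.
have sot : sorted geq (map predn t) by apply: sorted_mappred.
have ne : map predn t != [::] by rewrite /t; case: (s).
rewrite Et; apply: rt_trans (IH (map predn t) _ _) _.
- have sS : forall u, sumn (map S u) = (sumn u + size u)%N.
    by elim=> //= a u ->; rewrite addSn addnS addnA.
  move: lt; rewrite {1 2}Et sS size_map size_map.
  have : (0 < size (map predn t))%N by case: (map predn t) ne.
  rewrite size_map; lia.
- by rewrite /gotz_partition ne sot.
apply: rt_step; split; first by exists (map predn t); rewrite /gotz_partition ne sot.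
by right; exists (map predn t); rewrite /gotz_partition ne sot.
Qed.


Theorem theorem2p10 :
  rooted_binary_tree admissible (fun P Q => Q = sigma P) lambda_rel (1 : {poly rat}).
Proof.
split.
- by exists [:: 0%N]; rewrite gotz_go /= binp0 addr0.
- move=> P [s [/andP [ne so] ->]].
  exists (sigma (gotz s)), (gotz (map S s)); split=> //; split.
    by exists s; rewrite /gotz_partition ne so.
  split.
    exists (rcons s 0%N); rewrite /gotz_partition /sigma gotz_rcons0.
    split=> //; apply/andP; split; [by case: (s) | exact: sorted_rcons0].
  split.
    exists (map S s); rewrite /gotz_partition sorted_mapS // andbT.
    by case: (s) ne.
  split.
    by rewrite /sigma -gotz_rcons0; apply: gotz_rcons_mapS.
  split=> // Q [s' [/andP [_ so'] [E ->]]].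
  by rewrite (gotz_inj so' so (esym E)).
- move=> P [[s [/andP [ne so] ->]] [E | [s' [/andP [_ so'] [_ E]]]]].
    have : gotz (rcons s 0%N) = gotz [:: 0%N].
      by rewrite gotz_rcons0 -/(sigma _) -E gotz_go /= binp0 addr0.
    move/gotz_inj; rewrite sorted_rcons0 //; move=> /(_ erefl erefl).
    by case: (s) ne => // ? [] //.
  have : gotz (map S s') = gotz [:: 0%N] by rewrite -E gotz_go /= binp0 addr0.
  by move/gotz_inj; rewrite sorted_mapS //; move=> /(_ erefl erefl); case: (s').
- move=> P P' Q [[s [/andP [_ so] EP]] H1] [[s' [/andP [_ so'] EP']] H2].
  case: H1 => [E1 | [s1 [/andP [_ so1] [EP1 E1]]]]; case: H2 => [E2 | [s2 [/andP [_ so2] [EP2 E2]]]].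
  + by move: E2; rewrite E1 /sigma => /addrI.
  + exfalso; apply: (@gotz_rcons_mapS s s2 so so2).
    by rewrite gotz_rcons0 -EP -/(sigma _) -E1 E2.
  + exfalso; apply: (@gotz_rcons_mapS s' s1 so' so1).
    by rewrite gotz_rcons0 -EP' -/(sigma _) -E2 E1.
  + move: E2; rewrite E1 => /gotz_inj; rewrite !sorted_mapS // => /(_ erefl erefl).
    by move/(inj_map succn_inj) => E; rewrite EP1 EP2 E.
- move=> Q [s [ps ->]]; exact: (@reach (sumn s + size s).+1).
Qed.
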